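(* Let $X$ be a Hausdorff topological space, $\Phi$ a local semiflow on $X$, and $\mathscr A$ an attractor of $\Phi$ with region of attraction $\Omega=\Omega(\mathscr A)$. Assume $\mathscr A$ is closed and has a $\mathcal K_0$ function $\zeta$ on $\Omega$. Then $\mathscr A$ has a Lyapunov function $L$ on $\Omega$. If in addition $X$ is normal, then for any closed subset $K$ of $X$ with $K\subset\Omega\setminus\mathscr A$, there exists a Lyapunov function $L$ of $\mathscr A$ such that $L(x)\ge1$ for all $x\in K$.
   Context: A local semiflow $\Phi$ on $X$ is a continuous map from an open subset $\mathcal D_\Phi\subset\mathbb R^+\times X$ to $X$ such that: (i) for each $x$ there is $T_x\in(0,\infty]$ with $(t,x)\in\mathcal D_\Phi$ iff $t\in[0,T_x)$; (ii) $\Phi(0,x)=x$; (iii) if $(t+s,x)\in\mathcal D_\Phi$ with $t,s\ge0$ then $\Phi(t+s,x)=\Phi(t,\Phi(s,x))$. Write $\Phi(t)x=\Phi(t,x)$, $\Phi(t)M=\{\Phi(t)x:x\in M,\ t<T_x\}$. Convention: $U$ is a neighborhood of $A$ if $\overline A\subset\mathrm{int}\,U$. A set $K$ is invariant if $\Phi(t)K\subset K$ and $K\subset\Phi(t)K$ for all $t\ge0$. $K$ attracts $B$ if $T_x=\infty$ for all $x\in B$ and for every neighborhood $V$ of $K$ there is $t_0>0$ with $\Phi(t)B\subset V$ for all $t>t_0$. A set is s-compact if every sequence in it has a subsequence converging to a point of the set. An attractor is a nonempty s-compact invariant set $\mathscr A$ for which there is a neighborhood $N$ of $\mathscr A$ such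 that $\mathscr A$ attracts $N$ and every s-compact invariant subset of $N$ is contained in $\mathscr A$; $\Omega(\mathscr A)=\{x:\mathscr A\text{ attracts }\{x\}\}$. A $\mathcal K_0$ function of $\mathscr A$ is a nonnegative continuous function $\zeta$ on $\Omega$ with $\zeta(x)=0\iff x\in\mathscr A$. A Lyapunov function of $\mathscr A$ is a $\mathcal K_0$ function $L$ of $\mathscr A$ with $L(\Phi(t)x)<L(x)$ for all $x\in\Omega\setminus\mathscr A$ and $t>0$. *)

(* Defs.v *)
From HB Require Import structures.
From mathcomp Require Import all_boot all_order all_algebra.
From mathcomp Require Import all_classical all_reals all_analysis.
Set Implicit Arguments. Unset Strict Implicit. Unset Printing Implicit Defensive.
Import Order.TTheory GRing.Theory Num.Theory.
Import numFieldNormedType.Exports.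
Local Open Scope classical_set_scope.
Local Open Scope ring_scope.

Section semiflow.
Context {R : realType} {X : topologicalType}.

(* A local semiflow is given by a total function Phi : R -> X -> X together
   with the escape times T : X -> \bar R; the domain is
   D = {(t,x) | 0 <= t < T x}.  Only values on D are meaningful. *)
Definition sf_dom (T : X -> \bar R) : set (R * X) :=
  [set p | 0 <= p.1 /\ (p.1%:E < T p.2)%E].

Definition local_semiflow (Phi : R -> X -> X) (T : X -> \bar R) : Prop :=
  [/\
      (exists U : set (R * X), open U /\
         sf_dom T = U `&` [set p | 0 <= p.1]),
      {within sf_dom T, continuous (fun p : R * X => Phi p.1 p.2)},
      (forall x, (0 < T x)%E),
      (forall x, Phi 0 x = x) &
      (forall t s x, 0 <= t -> 0 <= s -> ((t + s)%:E < T x)%E ->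
         (t%:E < T (Phi s x))%E /\ Phi (t + s) x = Phi t (Phi s x))].

Definition sf_image (Phi : R -> X -> X) (T : X -> \bar R) (t : R) (M : set X)
  : set X := [set Phi t x | x in [set x | M x /\ (t%:E < T x)%E]].

Definition nbhd_of (U A : set X) : Prop := closure A `<=` interior U.

Definition invariant (Phi : R -> X -> X) (T : X -> \bar R) (K : set X) : Prop :=
  forall t, 0 <= t -> sf_image Phi T t K `<=` K /\ K `<=` sf_image Phi T t K.

Definition attracts (Phi : R -> X -> X) (T : X -> \bar R) (K B : set X) : Prop :=
  (forall x, B x -> T x = +oo%E) /\
  forall V : set X, nbhd_of V K ->
    exists2 t0 : R, 0 < t0 & forall t, t0 < t -> sf_image Phi T t B `<=` V.

Definition s_compact (K : set X) : Prop :=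
  forall u : nat -> X, (forall n, K (u n)) ->
    exists phi : nat -> nat, {homo phi : m n / (m < n)%N} /\
      exists2 x, K x & (u \o phi) @ \oo --> x.

Definition attractor (Phi : R -> X -> X) (T : X -> \bar R) (A : set X) : Prop :=
  [/\ A !=set0, s_compact A, invariant Phi T A &
      exists N : set X, [/\ nbhd_of N A, attracts Phi T A N &
        forall K : set X, K `<=` N -> s_compact K -> invariant Phi T K ->
          K `<=` A]].

Definition region_of_attraction (Phi : R -> X -> X) (T : X -> \bar R)
  (A : set X) : set X := [set x | attracts Phi T A [set x]].

Definition K0_function (Phi : R -> X -> X) (T : X -> \bar R) (A : set X)
  (zeta : X -> R) : Prop :=
  let Omega := region_of_attraction Phi T A in
  [/\ {within Omega, continuous zeta},
      (forall x, Omega x -> 0 <= zeta x) &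
      (forall x, Omega x -> (zeta x = 0 <-> A x))].

Definition Lyapunov_function (Phi : R -> X -> X) (T : X -> \bar R) (A : set X)
  (L : X -> R) : Prop :=
  K0_function Phi T A L /\
  forall x t, region_of_attraction Phi T A x -> ~ A x -> 0 < t ->
    L (Phi t x) < L x.

End semiflow.

(* Main.v *)
Require Import Defs.
From HB Require Import structures.
From mathcomp Require Import all_boot all_order all_algebra.
From mathcomp Require Import all_classical all_reals all_analysis.
From mathcomp Require Import lra.
Import Order.TTheory GRing.Theory Num.Theory.
Import numFieldNormedType.Exports.
Set Implicit Arguments. Unset Strict Implicit. Unset Printing Implicit Defensive.
Local Open Scope classical_set_scope.
Local Open Scope ring_scope.

Definition hh {R : realType} (t:R) : R := 2 - expR (- t).
Lemma hh_cont {R : realType} : continuous (@hh R).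
Proof.
move=> t; apply: cvgB; first exact: cvg_cst.
apply: (continuous_comp (f:= -%R)); first exact: continuousN.
exact: continuous_expR.
Qed.

Lemma nbhs_pairR {R : realType} {X : topologicalType} (a : R) (b : X) (P : set (R * X)) :
  nbhs (a,b) P -> nbhs b (fun y => P (a,y)).
Proof.
move=> [[U V] [/= Ua Vb] UV]; apply: filterS Vb => y Vy; apply: (UV (a,y)).
by split => //; exact: nbhs_singleton.
Qed.

Lemma nbhs_pairL {R : realType} {X : topologicalType} (a : R) (b : X) (P : set (R * X)) :
  nbhs (a,b) P -> nbhs a (fun s => P (s,b)).
Proof.
move=> [[U V] [/= Ua Vb] UV]; apply: filterS Ua => y Uy; apply: (UV (y,b)).
by split => //; exact: nbhs_singleton.
Qed.

Lemma hh0 {R : realType} : @hh R 0 = 1.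
Proof. by rewrite /hh oppr0 expR0; lra. Qed.
Lemma hh_le2 {R : realType} (t : R) : hh t <= 2.
Proof. by rewrite /hh; have := expR_gt0 (- t); lra. Qed.
Lemma hh_ge1 {R : realType} (t : R) : 0 <= t -> 1 <= hh t.
Proof.
move=> t0; rewrite /hh; have : expR (- t) <= expR 0 by rewrite ler_expR; lra.
rewrite expR0; lra.
Qed.

Section Lyap.
Context {R : realType} {X : topologicalType}
  (Phi : R -> X -> X) (T : X -> \bar R) (A : set X).
Hypothesis hsf : local_semiflow Phi T.
Hypothesis hatt : attractor Phi T A.
Hypothesis hcl : closed A.

Let Om := region_of_attraction Phi T A.

Lemma exN : exists N, nbhd_of N A /\ attracts Phi T A N.
Proof. by case: hatt => _ _ _ [N [nN aN _]]; exists N. Qed.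

Lemma A_intN N : nbhd_of N A -> A `<=` interior N.
Proof. by move=> nN a Aa; apply: nN; exact: subset_closure. Qed.

Lemma N_Om N : attracts Phi T A N -> N `<=` Om.
Proof.
move=> [NT Nat] y Ny; split; first by move=> z ->; exact: NT.
move=> V nV; have [t0 t00 H] := Nat V nV; exists t0 => // t tt0 w [z [zy zt] <-].
by apply: (H t tt0); exists z => //; split => //; rewrite zy.
Qed.

Lemma A_Om : A `<=` Om.
Proof.
have [N [nN aN]] := exN => a Aa; apply: (N_Om aN).
exact: nbhs_singleton (A_intN nN Aa).
Qed.

Lemma Om_T x : Om x -> T x = +oo%E.
Proof. by move=> [H _]; exact: H. Qed.

Lemma flow x t s : Om x -> 0 <= t -> 0 <= s -> Phi t (Phi s x) = Phi (t + s) x.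
Proof.
move=> Ox ht hs; have [_ _ _ _ h3] := hsf.
have : ((t + s)%R%:E < T x)%E by rewrite (Om_T Ox) ltry.
by move=> /(h3 t s x ht hs) [].
Qed.

Lemma Om_fwd x s : Om x -> 0 <= s -> Om (Phi s x).
Proof.
move=> Ox hs; have [_ _ h1 _ h3] := hsf.
have TP : T (Phi s x) = +oo%E.
  case E : (T (Phi s x)) => [r| |] //.
  - have : (((`|r| + 1) + s)%R%:E < T x)%E by rewrite (Om_T Ox) ltry.
    have r0 : 0 <= `|r| + 1 by rewrite addr_ge0.
    move=> /(h3 _ s x r0 hs) [] + _.
    rewrite E lte_fin.
    have : (r <= `|r|)%R by rewrite ler_normr lexx.
    move=> ha hb; exfalso; lra.
  - by have := h1 (Phi s x); rewrite E.
split; first by move=> z ->.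
move=> V nV; case: (Ox) => _ /(_ V nV) [t0 t00 H]; exists t0 => // t tt0 w [z [zy zt] <-].
rewrite zy flow //; last by rewrite ltW // (lt_trans t00).
apply: (H (t + s)); first by lra.
exists x => //; split => //; by rewrite (Om_T Ox) ltry.
Qed.


Lemma pc p : sf_dom T p ->
  (fun q => Phi q.1 q.2) @ within (sf_dom T) (nbhs p) --> Phi p.1 p.2.
Proof.
case: hsf => _ hc _ _ _ Dp.
by move/subspace_continuousP : hc => /(_ p Dp).
Qed.

Variable zeta : X -> R.
Hypothesis hz : K0_function Phi T A zeta.

Lemma zc x : Om x -> zeta @ within Om (nbhs x) --> zeta x.
Proof. by case: hz => hc _ _; move/subspace_continuousP : hc; apply. Qed.

Lemma closA : closure A = A.
Proof. by rewrite -(closure_id A).1. Qed.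

Lemma tail x e : Om x -> 0 < e -> exists2 S, 0 < S &
  nbhs x (fun y => Om y -> forall t, S < t -> zeta (Phi t y) < e).
Proof.
move=> Ox e0; have [N [nN [NT Nat]]] := exN.
pose V := interior [set y | N y /\ zeta y < e].
have AV : A `<=` V.
  move=> a Aa; have Oa := A_Om Aa.
  have z0 : zeta a = 0 by case: hz => _ _ /(_ a Oa) [_ ->].
  have H : \forall y \near within Om (nbhs a), zeta y < e.
    by apply: (cvgr_lt (zeta a) (zc Oa)); rewrite z0.
  apply: filterS2 (A_intN nN Aa) H => y Ny Hy; split => //.
  exact: Hy (N_Om (conj NT Nat) Ny).
have nV : nbhd_of V A.
  move=> a; rewrite closA => Aa.
  have oV : open V by exact: open_interior.
  by rewrite (interior_id V).1 //; exact: AV.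
have [t0 t00 Ht0] := Nat V nV.
have nI : nbhd_of (interior N) A.
  move=> a; rewrite closA => Aa.
  have oV : open (interior N) by exact: open_interior.
  rewrite (interior_id _).1 //.

  exact: (A_intN nN Aa).
have [_ /(_ _ nI) [t1 t10 Ht1]] := Ox.
pose t2 := t1 + 1.
have It2 : interior N (Phi t2 x).
  apply: (Ht1 t2); first by rewrite /t2; lra.
  by exists x => //; split => //; rewrite (Om_T Ox) ltry.
have Dp : sf_dom T (t2, x).
  by split => /=; [rewrite /t2; lra | rewrite (Om_T Ox) ltry].
have := pc Dp (open_nbhs_nbhs (conj (open_interior N) It2)).
move/nbhs_pairR => W.
exists (t0 + t2); first by rewrite /t2; lra.
apply: filterS W => y Wy Oy t tt.
have Dy : sf_dom T (t2, y).
  by split => /=; [rewrite /t2; lra | rewrite (Om_T Oy) ltry].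
have Ny : N (Phi t2 y) by exact: nbhs_singleton (Wy Dy).
have : V (Phi t y).
  have -> : Phi t y = Phi (t - t2) (Phi t2 y).
    by rewrite flow //; [congr Phi; lra | lra | rewrite /t2; lra].
  apply: (Ht0 (t - t2)); first lra.
  by exists (Phi t2 y) => //; split => //; rewrite NT // ltry.
by move/nbhs_singleton => [].
Qed.


Let G y t := hh t * zeta (Phi t y).
Let E := [set p : R * X | 0 <= p.1 /\ Om p.2].

Lemma PhiE p : E p ->
  (fun q => Phi q.1 q.2) @ within E (nbhs p) --> within Om (nbhs (Phi p.1 p.2)).
Proof.
move=> [p0 Op] P /= HP.
have Dp : sf_dom T p by split => //; rewrite (Om_T Op) ltry.
have := pc Dp HP; rewrite /within /= => H.
rewrite !nbhs_simpl /= in H *.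
apply: filterS H => q H [q0 Oq]; apply: H; last exact: Om_fwd.
by split => //; rewrite (Om_T Oq) ltry.
Qed.

Lemma JG p e : E p -> 0 < e -> nbhs p (fun q => E q -> `|G p.2 p.1 - G q.2 q.1| < e).
Proof.
move=> Ep e0.
have cv : (fun q => G q.2 q.1) @ within E (nbhs p) --> G p.2 p.1.
  apply: cvgM.
    apply: cvg_within_filter.
    apply: (continuous_comp (f := fst)); first exact: cvg_fst.
    exact: hh_cont.
  apply: cvg_comp (PhiE Ep) _.
  by case: Ep => p0 Op; exact: zc (Om_fwd Op p0).
by move/cvgrPdist_lt : cv => /(_ e e0).
Qed.


Lemma G_ge0 x t : Om x -> 0 <= t -> 0 <= G x t.
Proof.
move=> Ox t0; rewrite /G; apply: mulr_ge0.
  by have := hh_ge1 t0; lra.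
by case: hz => _ + _; apply; exact: Om_fwd.
Qed.

Lemma bnd x : Om x -> has_ubound [set G x t | t in [set t : R | 0 <= t]].
Proof.
move=> Ox; have [S S0 W] := tail Ox (@ltr01 R).
have Hx := nbhs_singleton W Ox.
have := @segment_compact R 0 S; move/compact_near_coveringP.
move=> /(_ R (pinfty_nbhs R) (fun M t => 0 <= t -> G x t < M) _) H.
have [] := H.
  move=> t0; rewrite /= in_itv /= => /andP [t00 t0S].
  have Ep : E (t0, x) by split.
  have := nbhs_pairL (JG Ep ltr01) => /= H1.
  exists ([set s | E (s, x) -> `|G x t0 - G x s| < 1], [set M | G x t0 + 1 < M]).
    split => //=; exists (G x t0 + 1); split; [exact: num_real | by move=> y].
  move=> [s M] /= [Hs HM] s0.
  have := Hs (conj s0 Ox); rewrite ltr_distlC; lra.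
move=> M [_ HM].
exists (Num.max (M + 1) 2) => _ [t /= t0 <-].
have [tS|St] := leP t S.
  rewrite le_max; apply/orP; left; apply: ltW; apply: (HM (M + 1)); first lra.
    by rewrite /= in_itv /= t0 tS.
  exact: t0.
rewrite le_max; apply/orP; right.
have := Hx t St; have := hh_le2 t; have := hh_ge1 t0.
have : 0 <= zeta (Phi t x) by case: hz => _ + _; apply; exact: Om_fwd.
rewrite /G; nra.
Qed.


Definition Lf x := sup [set G x t | t in [set t : R | 0 <= t]].

Lemma phi0 x : Phi 0 x = x.
Proof. by case: hsf. Qed.

Lemma zeta_ge0 x : Om x -> 0 <= zeta x.
Proof. by case: hz => _ + _; apply. Qed.

Lemma Lf_ge x t : Om x -> 0 <= t -> G x t <= Lf x.
Proof. by move=> Ox t0; apply: (ub_le_sup (bnd Ox)); exists t. Qed.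

Lemma Lf_le x c : (forall t, 0 <= t -> G x t <= c) -> Lf x <= c.
Proof.
move=> H; apply: ge_sup; first by exists (G x 0); exists 0%R => //=.
by move=> _ [t /= t0 <-]; exact: H.
Qed.

Lemma G0 x : G x 0 = zeta x.
Proof. by rewrite /G hh0 phi0 mul1r. Qed.

Lemma zeta_le_Lf x : Om x -> zeta x <= Lf x.
Proof. by move=> Ox; rewrite -G0; exact: Lf_ge. Qed.

Lemma Lf_zero x : Om x -> (Lf x = 0 <-> A x).
Proof.
move=> Ox; split.
  move=> L0; have := zeta_le_Lf Ox; have := zeta_ge0 Ox; rewrite L0 => a b.
  have z0 : zeta x = 0 by apply/eqP; rewrite eq_le a b.
  by case: hz => _ _ /(_ x Ox) [+ _]; apply.
move=> Ax; apply/eqP; rewrite eq_le; apply/andP; split; last first.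
  by have := zeta_le_Lf Ox; have := zeta_ge0 Ox; lra.
apply: Lf_le => t t0.
have At : A (Phi t x).
  case: hatt => _ _ /(_ t t0) [+ _] _; apply.
  by exists x => //; split => //; rewrite (Om_T Ox) ltry.
rewrite /G; have -> : zeta (Phi t x) = 0 by case: hz => _ _ /(_ _ (Om_fwd Ox t0)) [_ ->].
by rewrite mulr0.
Qed.


Lemma Lf_ge0 x : Om x -> 0 <= Lf x.
Proof. by move=> Ox; have := zeta_le_Lf Ox; have := zeta_ge0 Ox; lra. Qed.

Lemma Lf_up x e : Om x -> 0 < e -> nbhs x (fun y => Om y -> Lf y <= Lf x + e).
Proof.
move=> Ox e0; have [S S0 W] := tail Ox (e := e / 2) ltac:(lra).
have := @segment_compact R 0 S; move/compact_near_coveringP.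
move=> /(_ X (nbhs x) (fun y t => 0 <= t -> Om y -> G y t < Lf x + e) _) H.
have {H}NH := H _.
have {}NH : \forall y \near nbhs x, `[0, S]%classic `<=` (fun t => 0 <= t -> Om y -> G y t < Lf x + e).
  apply: NH => t0; rewrite /= in_itv /= => /andP [t00 _].
  have Ep : E (t0, x) by split.
  have [[U V] [/= Ut Vx] UV] := JG Ep (e := e/2) ltac:(lra).
  exists (U, V) => //= -[s y] /= [Us Vy] s0 Oy.
  have := UV (s, y) (conj Us Vy) (conj s0 Oy) => /=.
  rewrite ltr_distlC => /andP [_ h2].
  have := Lf_ge Ox t00; lra.
apply: filterS2 NH W => y Hy Wy Oy; apply: Lf_le => t t0.
have [tS|St] := leP t S.
  by apply: ltW; apply: Hy => //; rewrite /= in_itv /= t0 tS.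
have := Wy Oy t St; have := hh_le2 t; have := hh_ge1 t0.
have := zeta_ge0 (Om_fwd Oy t0); have := Lf_ge0 Ox; rewrite /G; nra.
Qed.

Lemma Lf_lo x e : Om x -> 0 < e -> nbhs x (fun y => Om y -> Lf x - e < Lf y).
Proof.
move=> Ox e0.
have [v [t /= t0 <-] hv] := @sup_adherent R _ e e0 (conj (ex_intro _ (G x 0) (ex_intro2 _ _ 0%R (lexx _) erefl)) (bnd Ox)).
have Ep : E (t, x) by split.
have {}hv : Lf x - e < G x t by exact: hv.
have := nbhs_pairR (JG Ep (e := G x t - (Lf x - e)) ltac:(lra)).
apply: filterS => y /= H Oy.
have := H (conj t0 Oy); rewrite ltr_distlC => /andP [h1 _].
have := Lf_ge Oy t0; lra.
Qed.

Lemma Lf_cont : {within Om, continuous Lf}.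
Proof.
apply/subspace_continuousP => x Ox; apply/cvgrPdist_lt => e e0.
suff : \forall y \near nbhs x, Om y -> `|Lf x - Lf y| < e by [].
have e2 : 0 < e / 2 by lra.
have U1 := Lf_up Ox e2; have U2 := Lf_lo Ox e2.
apply: filterS2 U1 U2.
move=> y h1 h2 Oy; have := h1 Oy; have := h2 Oy.
rewrite ltr_distlC; move=> a b; apply/andP; split; lra.
Qed.


Lemma Lf_dec x tau : Om x -> ~ A x -> 0 < tau -> Lf (Phi tau x) < Lf x.
Proof.
move=> Ox nAx tau0.
have zx : 0 < zeta x.
  rewrite lt_neqAle zeta_ge0 // andbT; apply/eqP => /esym z0; apply: nAx.
  by case: hz => _ _ /(_ x Ox) [+ _]; apply.
have P0 : 0 < Lf x by have := zeta_le_Lf Ox; lra.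
have [S S0 W] := tail Ox (e := Lf x / 4) ltac:(lra).
have Hx := nbhs_singleton W Ox.
pose d := expR (- S) * (1 - expR (- tau)).
have eS : 0 < expR (- S) by exact: expR_gt0.
have eS1 : expR (- S) < 1 by rewrite -expR0 ltr_expR; lra.
have et1 : expR (- tau) < 1 by rewrite -expR0 ltr_expR; lra.
have et0 : 0 < expR (- tau) by exact: expR_gt0.
have d0 : 0 < d by rewrite /d mulr_gt0 //; lra.
have d1 : d < 1 by rewrite /d; nra.
have : Lf (Phi tau x) <= (1 - d/2) * Lf x.
  apply: Lf_le => t t0.
  rewrite /G flow //; last exact: ltW.
  have Ot : Om (Phi (t + tau) x) by apply: Om_fwd => //; lra.
  have z0 := zeta_ge0 Ot.
  have h2 := hh_le2 t.
  have h1 := hh_ge1 t0.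
  have [tS|St] := leP (t + tau) S.
    have Gb : hh (t + tau) * zeta (Phi (t + tau) x) <= Lf x.
      by apply: (Lf_ge Ox (t := t + tau)); lra.
    have hb : hh t <= hh (t + tau) - d.
      rewrite /hh /d opprD expRD.
      have : expR (- S) <= expR (- t) by rewrite ler_expR; lra.
      nra.
    have hb2 := hh_le2 (t + tau).
    have k1 : 0 <= d * zeta (Phi (t + tau) x) * (2 - hh (t + tau)).
      by rewrite mulr_ge0 ?mulr_ge0 //; lra.
    have k2 : 0 <= (hh (t + tau) - d - hh t) * zeta (Phi (t + tau) x).
      by rewrite mulr_ge0 //; lra.
    have k3 : 0 <= (1 - d / 2) * (Lf x - hh (t + tau) * zeta (Phi (t + tau) x)).
      by rewrite mulr_ge0 //; lra.
    nra.
  have := Hx _ St.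
  nra.
move=> h; have : (1 - d/2) * Lf x < Lf x by nra.
lra.
Qed.

Lemma lyap_main : Lyapunov_function Phi T A Lf /\ forall x, Om x -> zeta x <= Lf x.
Proof.
split; last exact: zeta_le_Lf.
split; last by move=> x t Ox nAx t0; exact: Lf_dec.
split.
- exact: Lf_cont.
- exact: Lf_ge0.
- exact: Lf_zero.
Qed.

End Lyap.

Theorem theorem5p3 (R : realType) (X : topologicalType)
  (Phi : R -> X -> X) (T : X -> \bar R) (A : set X) :
  hausdorff_space X ->
  local_semiflow Phi T ->
  attractor Phi T A ->
  closed A ->
  (exists zeta : X -> R, K0_function Phi T A zeta) ->
  (exists L : X -> R, Lyapunov_function Phi T A L) /\
  (@normal_space X ->
   forall K : set X, closed K ->
     K `<=` region_of_attraction Phi T A `\` A ->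
     exists L : X -> R, Lyapunov_function Phi T A L /\
       (forall x, K x -> 1 <= L x)).
Proof.
move=> _ hsf hatt hcl [zeta hz]; split.
  by exists (Lf Phi zeta); have [] := lyap_main hsf hatt hcl hz.
move=> hn K cK KOm.
have AK : A `&` K = set0.
  by apply/seteqP; split => // x [Ax /KOm [_]].
have [u [cu uA uK ur]] := @urysohn_ext_itv X R hn A K 0 1 hcl cK AK ltr01.
have u01 x : 0 <= u x <= 1.
  by have := ur (u x) (imageT u x); rewrite /= in_itv.
pose zeta' := fun x => zeta x + u x.
case: (hz) => zcont zpos zzero.
have hz' : K0_function Phi T A zeta'.
  split.
  - apply/subspace_continuousP => x Ox; apply: cvgD.
      by move/subspace_continuousP : zcont; apply.
    by apply: cvg_within_filter; exact: cu.
  - by move=> x Ox; have := zpos x Ox; have /andP[] := u01 x; rewrite /zeta'; lra.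
  - move=> x Ox; split.
      move=> z0; apply/(zzero x Ox).1.
      have := zpos x Ox; have /andP[] := u01 x; move: z0; rewrite /zeta'; lra.
    move=> Ax; rewrite /zeta' (zzero x Ox).2 // (uA (u x)) ?add0r //.
have [HL Hle] := lyap_main hsf hatt hcl hz'.
exists (Lf Phi zeta'); split => // x Kx.
have [Ox _] := KOm x Kx.
have := Hle x Ox; have := zpos x Ox; rewrite /zeta' (uK (u x)); last by exists x.
lra.
Qed.
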